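(* Let $\Omega\subset\mathbb{R}^d$ be open and connected, $m\ge1$, $p\colon\Omega\to[1,2]$ measurable, $X=L^2(\Omega,\mathbb{R}^m)$, $\rho_p(f)=\int_\Omega|f(x)|^{p(x)}\,dx$, and $\tau>0$. Then for every $f\in X$ and almost every $x\in\Omega$, $$\operatorname{prox}_{\tau\rho_p^*}(f)(x)=V_\tau\big(f(x),p(x)\big)\,\frac{f(x)}{|f(x)|},$$ with the convention that the value is $0$ if $f(x)=0$, where $$V_\tau(z,q)=\begin{cases}\min\{|z|,1\}, & q=1,\\ \frac{2|z|}{\tau+2}, & q=2,\\ |z|-\bar\alpha(|z|,q,\tau^{1-q}), & 1<q<2,\end{cases}$$ and, for $a>0$ and $s>0$, $\bar\alpha(a,q,s)$ denotes the unique solution $\alpha\in(0,a)$ of $\alpha+s\,q\,\alpha^{q-1}=a$. *)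

(* Defs.v *)
From HB Require Import structures.
From mathcomp Require Import all_boot all_order all_algebra.
From mathcomp Require Import all_classical all_reals all_analysis.

Set Implicit Arguments.
Unset Strict Implicit.
Unset Printing Implicit Defensive.

Import Order.TTheory GRing.Theory Num.Theory.
Import numFieldNormedType.Exports.
Local Open Scope classical_set_scope.
Local Open Scope ring_scope.

(* Lebesgue measure on R^(n+1), built as the iterated product measure  *)
(* ((R x R) x R) x ... of the one-dimensional Lebesgue measure.         *)
Section ProductMeasure.
(* The product measure m1 \x m2, with its sigma-finiteness instance
   (the library instance is shadowed by a later canonical declaration). *)
Local Open Scope ereal_scope.
Context d1 d2 (T1 : measurableType d1) (T2 : measurableType d2) (R : realType).
Variable m1 : {sigma_finite_measure set T1 -> \bar R}.
Variable m2 : {sigma_finite_measure set T2 -> \bar R}.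
Definition pmeas := (m1 \x m2)%E.
HB.instance Definition _ := Measure.on pmeas.
Lemma pmeas_sigma_finite : sigma_finite setT pmeas.
Proof.
have /sigma_finiteP[F [TF ndF Foo]] := sigma_finiteT m1.
have /sigma_finiteP[G [TG ndG Goo]] := sigma_finiteT m2.
exists (fun n => F n `*` G n).
 rewrite -setXTT TF TG predeqE => -[x y]; split.
    move=> [/= [n _ Fnx] [k _ Gky]]; exists (maxn n k) => //; split.
    - by move: x Fnx; exact/subsetPset/ndF/leq_maxl.
    - by move: y Gky; exact/subsetPset/ndG/leq_maxr.
  by move=> [n _ []/= ? ?]; split; exists n.
move=> k; have [? ?] := Foo k; have [? ?] := Goo k.
split; first exact: measurableX.
by rewrite /pmeas product_measure1E// lte_mul_pinfty// ge0_fin_numE.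
Qed.
HB.instance Definition _ := Measure_isSigmaFinite.Build _ _ _ pmeas pmeas_sigma_finite.
End ProductMeasure.

Record mspace (R : realType) := MSpace {
  ms_disp : measure_display;
  ms_car : measurableType ms_disp;
  ms_mu : {sigma_finite_measure set ms_car -> \bar R} }.

Fixpoint lebRd (R : realType) (n : nat) : mspace R :=
  match n with
  | 0 => @MSpace R _ (measurableTypeR R) (@lebesgue_measure R : {sigma_finite_measure set (measurableTypeR R) -> \bar R})
  | n'.+1 =>
    let L := lebRd R n' in
    @MSpace R _ (ms_car L * measurableTypeR R)%type
      (@pmeas _ _ _ _ R (ms_mu L) (@lebesgue_measure R)
         : {sigma_finite_measure set (ms_car L * measurableTypeR R)%type -> \bar R})
  end.

Definition Rd (R : realType) (n : nat) := ms_car (lebRd R n).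
Definition lebd (R : realType) (n : nat) := ms_mu (lebRd R n).

(* The canonical identification of the product model with row vectors
   'rV[R]_(n+1) (used to transport the topology of R^(n+1)). *)
Fixpoint vecRd (R : realType) (n : nat) : Rd R n -> 'rV[R]_n.+1 :=
  match n return Rd R n -> 'rV[R]_n.+1 with
  | 0 => fun x => \row_(i < 1) x
  | n'.+1 => fun x =>
      \row_(i < n'.+2)
        (if (i < n'.+1)%N then (@vecRd R n' x.1) 0 (inord i) else x.2)
  end.

Definition enorm (R : realType) (m : nat) (v : 'rV[R]_m) : R :=
  Num.sqrt (\sum_(i < m) v 0 i ^+ 2).

Section Functional.
Context (R : realType) (n m : nat).
Local Notation T := (Rd R n).
Local Notation mu := (lebd R n).
Variable Om : set T.

(* membership in X = L^2(Omega, R^m) (as functions; classes mod a.e.) *)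
Definition L2 (f : T -> 'rV[R]_m) : Prop :=
  (forall i : 'I_m, measurable_fun Om (fun x => f x 0 i)) /\
  (\int[mu]_(x in Om) ((enorm (f x)) ^+ 2)%:E < +oo)%E.

Definition L2inner (f g : T -> 'rV[R]_m) : \bar R :=
  (\int[mu]_(x in Om) (\sum_(i < m) f x 0 i * g x 0 i)%:E)%E.

Definition L2norm2 (f : T -> 'rV[R]_m) : \bar R :=
  (\int[mu]_(x in Om) ((enorm (f x)) ^+ 2)%:E)%E.

Definition rho (p : T -> R) (f : T -> 'rV[R]_m) : \bar R :=
  (\int[mu]_(x in Om) ((enorm (f x)) `^ (p x))%:E)%E.

Definition rho_star (p : T -> R) (g : T -> 'rV[R]_m) : \bar R :=
  ereal_sup [set (L2inner f g - rho p f)%E | f in L2].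

Definition prox_objective (F : (T -> 'rV[R]_m) -> \bar R) (tau : R)
    (f g : T -> 'rV[R]_m) : \bar R :=
  (tau%:E * F g + (2^-1)%:E * L2norm2 (fun x => (g x - f x)%R))%E.

Definition is_prox (F : (T -> 'rV[R]_m) -> \bar R) (tau : R)
    (f g : T -> 'rV[R]_m) : Prop :=
  L2 g /\ forall h, L2 h ->
    (prox_objective F tau f g <= prox_objective F tau f h)%E.

End Functional.

Definition alpha_bar (R : realType) (a q s : R) : R :=
  xget 0 [set al : R | 0 < al < a /\ al + s * q * al `^ (q - 1) = a].

Definition Vtau (R : realType) (m : nat) (tau : R) (z : 'rV[R]_m) (q : R) : R :=
  if q == 1 then Num.min (enorm z) 1
  else if q == 2 then 2 * enorm z / (tau + 2)
  else enorm z - alpha_bar (enorm z) q (tau `^ (1 - q)).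

Definition prox_formula (R : realType) (T : Type) (m : nat) (tau : R)
    (p : T -> R) (f : T -> 'rV[R]_m) : T -> 'rV[R]_m :=
  fun x => if f x == 0 then 0
           else (Vtau tau (f x) (p x) / enorm (f x)) *: f x.

(* Main.v *)
Require Import Defs.
From HB Require Import structures.
From mathcomp Require Import all_boot all_order all_algebra.
From mathcomp Require Import all_classical all_reals all_analysis.
From mathcomp Require Import lra ring measurable_realfun.
Import Order.TTheory GRing.Theory Num.Theory.
Import numFieldNormedType.Exports.
Local Open Scope classical_set_scope.
Local Open Scope ring_scope.
Set Implicit Arguments. Unset Strict Implicit. Unset Printing Implicit Defensive.

Lemma vec_coord_meas (R : realType) (n : nat) (i : 'I_n.+1) :
  measurable_fun setT (fun x : Rd R n => vecRd x 0 i).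
Proof.
elim: n i => [|n IH] i.
  by rewrite /=; apply: (eq_measurable_fun id) => // x _; rewrite mxE.
rewrite /=.
case: (ltnP i n.+1) => hi.
  have := IH (inord i).
  move=> h.
  apply: (eq_measurable_fun ((fun x : Rd R n => vecRd x 0 (inord i)) \o fst)).
    by move=> x _; rewrite mxE hi.
  apply: measurableT_comp => //. 
apply: (eq_measurable_fun snd).
  by move=> x _; rewrite mxE ltnNge hi.
exact: measurable_snd.
Qed.
Lemma ball_rV (R : realType) k (x y : 'rV[R]_k) (e : R) : 0 < e ->
  (forall i, `|x 0 i - y 0 i| < e) -> ball x e y.
Proof.
move=> e0 h; split => // i j.
rewrite (ord1 i); exact: h.
Qed.
Section OpenMeas.
Variables (R : realType) (n : nat).

Definition rbox (s : seq (rat * rat)) : set (Rd R n) :=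
  [set x | forall i : 'I_n.+1, ratr (nth (0,0) s i).1 < vecRd x 0 i < ratr (nth (0,0) s i).2].

Lemma rbox_meas s : measurable (rbox s).
Proof.
have -> : rbox s = \bigcap_(k in [set: nat])
   (if (k < n.+1)%N then
      [set x : Rd R n | ratr (nth (0,0) s k).1 < vecRd x 0 (inord k) < ratr (nth (0,0) s k).2]
    else setT).
  apply/seteqP; split=> [x hx k _|x hx i] /=.
    case: ifPn => // hk; have := hx (inord k); by rewrite inordK.
  have := hx (val i) I; rewrite ltn_ord inord_val; exact.
apply: bigcapT_measurable => k; case: ifPn => // _.
have := @vec_coord_meas R n (inord k) measurableT _ (measurable_itv `]ratr (nth (0,0) s k).1, ratr (nth (0,0) s k).2[).
rewrite setTI; congr measurable; apply/seteqP; split=> x /=;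
  by rewrite in_itv /=.
Qed.

Lemma open_preimage_meas (U : set 'rV[R]_n.+1) : open U -> measurable (@vecRd R n @^-1` U).
Proof.
move=> oU.
set P := @vecRd R n @^-1` U.
pose F (k : nat) : set (Rd R n) := match unpickle k with
  | Some s => if `[< rbox s `<=` P >] then rbox s else set0
  | None => set0 end.
have -> : P = \bigcup_(k in [set: nat]) F k.
  apply/seteqP; split=> [x Px|x [k _]]; last first.
    rewrite /F; case: (unpickle k) => [s|] //; case: asboolP => // h; exact: h.
  have : nbhs (vecRd x) U by apply: oU.
  case/nbhs_ballP => e /= e0 hb.
  have ha : forall i : 'I_n.+1, exists q : rat, ratr q \in `](vecRd x 0 i - e), (vecRd x 0 i)[.
    move=> i; apply: rat_in_itvoo; rewrite ltrBlDr ltrDl //.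
  have hb' : forall i : 'I_n.+1, exists q : rat, ratr q \in `](vecRd x 0 i), (vecRd x 0 i + e)[.
    move=> i; apply: rat_in_itvoo; rewrite ltrDl //.
  pose a i := xget 0%R [set q : rat | ratr q \in `](vecRd x 0 i - e), (vecRd x 0 i)[].
  pose b i := xget 0%R [set q : rat | ratr q \in `](vecRd x 0 i), (vecRd x 0 i + e)[].
  have ha' i : ratr (a i) \in `](vecRd x 0 i - e), (vecRd x 0 i)[.
    rewrite /a; case: xgetP => //; case: (ha i) => q hq /(_ q) //.
  have hb2 i : ratr (b i) \in `](vecRd x 0 i), (vecRd x 0 i + e)[.
    rewrite /b; case: xgetP => //; case: (hb' i) => q hq /(_ q) //.
  pose s := [seq (a i, b i) | i <- enum 'I_n.+1].
  have hs (i : 'I_n.+1) : nth (0,0) s i = (a i, b i).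
    by rewrite (nth_map i) ?size_enum_ord // nth_ord_enum.
  have sub : rbox s `<=` P.
    move=> y hy; rewrite /P /=; apply: hb.
    apply: ball_rV => // i.
    have := hy i; rewrite hs /= => /andP [h1 h2].
    have := ha' i; have := hb2 i; rewrite !in_itv /= => /andP[h3 h4] /andP[h5 h6].
    rewrite ltr_norml; apply/andP; split; lra.
  exists (pickle s) => //.
  rewrite /F pickleK; case: asboolP => // _.
  move=> i; rewrite hs /=.
  have := ha' i; have := hb2 i; rewrite !in_itv /= => /andP[h3 h4] /andP[h5 h6].
  by rewrite h6 h3.
apply: bigcup_measurable => k _; rewrite /F.
case: (unpickle k) => [s|] //; case: asboolP => // _; exact: rbox_meas.
Qed.
End OpenMeas.
Lemma alpha_ex (R : realType) (a q s : R) : 0 < a -> 1 < q -> 0 < s ->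
  exists al : R, 0 < al < a /\ al + s * q * al `^ (q - 1) = a.
Proof.
move=> a0 q1 s0.
have q0 : 0 < q by apply: lt_trans q1.
have q10 : 0 < q - 1 by rewrite subr_gt0.
pose g t := t + s * q * t `^ (q - 1).
pose c := a / (2 * s * q).
have c0 : 0 < c by rewrite /c divr_gt0 // !mulr_gt0.
pose ep := Num.min (a / 2) (c `^ ((q - 1)^-1) / 2).
have cq0 : 0 < c `^ ((q - 1)^-1) by apply: powR_gt0.
have ep0 : 0 < ep by rewrite /ep lt_min !divr_gt0.
have epa : ep < a by rewrite /ep gt_min; apply/orP; left; lra.
have epc : ep `^ (q - 1) < c.
  have -> : c = (c `^ ((q - 1)^-1)) `^ (q - 1).
    by rewrite -powRrM mulVf ?gt_eqF // powRr1 // ltW.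
  apply: gt0_ltr_powR => //; rewrite ?nnegrE ?ltW //.
  rewrite /ep gt_min; apply/orP; right; lra.
have gep : g ep < a.
  rewrite /g.
  have h1 : s * q * ep `^ (q - 1) < s * q * c by rewrite ltr_pM2l // mulr_gt0.
  have h2 : s * q * c = a / 2.
    rewrite /c; field; apply/andP; split; rewrite gt_eqF //.
  have : ep <= a / 2 by rewrite /ep ge_min lexx.
  lra.
have ga : a < g a.
  rewrite /g ltrDl; apply: mulr_gt0; [exact: mulr_gt0|exact: powR_gt0].
have cont : {within `[ep, a], continuous g}.
  apply: derivable_within_continuous => x; rewrite in_itv /= => /andP[hx _].
  apply: derivableD => //; apply: derivableM => //.
  apply: derivable_powR; rewrite in_itv /= andbT; exact: lt_le_trans hx.
have [al hal gal] : exists2 al, al \in `[ep, a] & g al = a.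
  apply: IVT => //; first exact: ltW.
  rewrite ge_min le_max; apply/andP; split; apply/orP.
    by left; exact: ltW.
  by right; exact: ltW.
move: hal; rewrite in_itv /= => /andP[h1 h2].
have al0 : 0 < al by exact: lt_le_trans h1.
exists al; split => //; apply/andP; split => //.
have : 0 < s * q * al `^ (q - 1) by apply: mulr_gt0; [exact: mulr_gt0|exact: powR_gt0].
rewrite /g in gal; lra.
Qed.
Lemma Vtau_key (R : realType) m (tau : R) (z : 'rV[R]_m) q : 0 < tau -> 0 < enorm z -> 1 <= q <= 2 ->
  0 <= Vtau tau z q <= enorm z /\ forall r, 0 <= r ->
  r * Vtau tau z q - r `^ q <= ((enorm z - Vtau tau z q) / tau) * Vtau tau z q
                                 - ((enorm z - Vtau tau z q) / tau) `^ q.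
Proof.
move=> t0 a0 /andP[q1 q2].
rewrite /Vtau; set a := enorm z.
case: eqP => [->|qn1].
  case: (leP a 1) => ha.
    rewrite subrr mul0r powR0 ?oner_eq0 // mul0r subrr.
    split; first by rewrite lexx ltW.
    move=> r r0; rewrite powRr1 //; nra.
  idtac.
  have U0 : 0 <= (a - 1) / tau by rewrite divr_ge0 // ?ltW //; lra.
  split; first by rewrite ler01 ltW.
  by move=> r r0; rewrite !powRr1 // !mulr1 !subrr.
case: eqP => [->|qn2].
  have -> : (a - 2 * a / (tau + 2)) / tau = a / (tau + 2).
    field; apply/andP; split; rewrite gt_eqF //; lra.
  have hV : 2 * a / (tau + 2) = 2 * (a / (tau + 2)) by rewrite mulrA.
  have t2 : 0 < tau + 2 by lra.
  have u0 : 0 < a / (tau + 2) by rewrite divr_gt0.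
  split.
    rewrite hV; apply/andP; split; first by rewrite ltW // mulr_gt0.
    have hu : a = a / (tau + 2) * (tau + 2) by field; rewrite gt_eqF. 
    set u := a / (tau + 2) in u0 hu *; nra.
  move=> r r0; rewrite hV.
  rewrite (powR_mulrn _ r0) (powR_mulrn _ (ltW u0)). have := sqr_ge0 (r - a / (tau + 2)). nra.
have q1' : 1 < q by rewrite lt_neqAle q1 andbT; apply/eqP => h; apply: qn1.
have q0 : 0 < q by apply: lt_trans q1'.
have q10 : 0 < q - 1 by rewrite subr_gt0.
have s0 : 0 < tau `^ (1 - q) by apply: powR_gt0.
have := xgetPex 0 (@alpha_ex R a q _ a0 q1' s0); rewrite -/(alpha_bar a q (tau `^ (1 - q))).
set al := alpha_bar a q _ => -[/andP[al0 ala] hal].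
have -> : a - (a - al) = al by rewrite opprB addrC subrK.
set U := al / tau.
have U0 : 0 < U by rewrite divr_gt0.
have hV : a - al = q * U `^ (q - 1).
  rewrite /U powRM ?ltW ?invr_gt0 // -powR_inv1 ?ltW // -powRrM.
  have -> : -1 * (q - 1) = 1 - q by ring.
  lra.
split; first by apply/andP; split; lra.
move=> r r0; rewrite hV.
have UV : U * (q * U `^ (q - 1)) = q * U `^ q.
  by rewrite mulrCA mulr_powRB1 // ltW.
rewrite UV.
have qq : q^-1 + (q / (q - 1))^-1 = 1.
  by rewrite invf_div; field; rewrite gt_eqF.
have := conjugate_powR r0 (powR_ge0 U (q - 1)) q0 (divr_gt0 q0 q10) qq.
rewrite -powRrM.
have -> : (q - 1) * (q / (q - 1)) = q by field; rewrite gt_eqF.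
rewrite invf_div.
move=> h.
have h2 : r * (q * U `^ (q - 1)) <= r `^ q + (q - 1) * U `^ q.
  have -> : r * (q * U `^ (q - 1)) = q * (r * U `^ (q - 1)) by ring.
  have -> : r `^ q + (q - 1) * U `^ q = q * (r `^ q / q + U `^ q * ((q - 1) / q)).
    by field; rewrite gt_eqF.
  by rewrite ler_pM2l.
lra.
Qed.
Section Vec.
Variables (R : realType) (m : nat).
Implicit Types (u w z : 'rV[R]_m).

Definition dotv u w : R := \sum_(i < m) u 0 i * w 0 i.

Lemma dotvC u w : dotv u w = dotv w u.
Proof. by apply: eq_bigr => i _; rewrite mulrC. Qed.

Lemma dotvZl (c : R) u w : dotv (c *: u) w = c * dotv u w.
Proof. by rewrite /dotv mulr_sumr; apply: eq_bigr => i _; rewrite mxE mulrA. Qed.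

Lemma dotvZr (c : R) u w : dotv u (c *: w) = c * dotv u w.
Proof. by rewrite dotvC dotvZl dotvC. Qed.

Lemma dotv0r u : dotv u 0 = 0.
Proof. by rewrite /dotv big1 // => i _; rewrite mxE mulr0. Qed.

Lemma dotv0l u : dotv 0 u = 0.
Proof. by rewrite /dotv big1 // => i _; rewrite mxE mul0r. Qed.

Lemma dotv_ge0 u : 0 <= dotv u u.
Proof. by apply: sumr_ge0 => i _; rewrite -expr2 sqr_ge0. Qed.

Lemma enorm_ge0 u : 0 <= enorm u.
Proof. exact: sqrtr_ge0. Qed.

Lemma enorm_sq u : enorm u ^+ 2 = dotv u u.
Proof.
rewrite /enorm sqr_sqrtr; last by apply: sumr_ge0 => i _; rewrite sqr_ge0.
by apply: eq_bigr => i _; rewrite expr2.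
Qed.

Lemma enorm_eq0 u : enorm u = 0 -> u = 0.
Proof.
move=> h; have : dotv u u = 0 by rewrite -enorm_sq h expr0n.
move/eqP; rewrite psumr_eq0 => [/allP hall|i _]; last by rewrite -expr2 sqr_ge0.
apply/rowP => i; rewrite mxE.
have := hall i (mem_index_enum _); rewrite /= -expr2 sqrf_eq0 => /eqP //.
Qed.

Lemma enorm0 : enorm (0 : 'rV[R]_m) = 0.
Proof. by rewrite /enorm big1 ?sqrtr0 // => i _; rewrite mxE expr0n. Qed.

Lemma enormZ (c : R) u : enorm (c *: u) = `|c| * enorm u.
Proof.
rewrite /enorm.
have -> : \sum_(i < m) (c *: u) 0 i ^+ 2 = c ^+ 2 * \sum_(i < m) u 0 i ^+ 2.
  by rewrite mulr_sumr; apply: eq_bigr => i _; rewrite mxE exprMn.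
by rewrite sqrtrM ?sqr_ge0 // sqrtr_sqr.
Qed.

Lemma dotv_CS u w : dotv u w <= enorm u * enorm w.
Proof.
have [hu|hu] := eqVneq (enorm u) 0.
  by rewrite (enorm_eq0 hu) /dotv big1 ?enorm0 ?mul0r // => i _; rewrite mxE mul0r.
have [hw|hw] := eqVneq (enorm w) 0.
  by rewrite (enorm_eq0 hw) /dotv big1 ?enorm0 ?mulr0 // => i _; rewrite mxE mulr0.
set a := enorm w; set b := enorm u.
have a0 : 0 < a by rewrite lt_neqAle eq_sym hw enorm_ge0.
have b0 : 0 < b by rewrite lt_neqAle eq_sym hu enorm_ge0.
have h : 0 <= \sum_(i < m) (a * u 0 i - b * w 0 i) ^+ 2 by apply: sumr_ge0 => i _; rewrite sqr_ge0.
have e : \sum_(i < m) (a * u 0 i - b * w 0 i) ^+ 2 =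
    a ^+ 2 * dotv u u - 2 * a * b * dotv u w + b ^+ 2 * dotv w w.
  rewrite /dotv !mulr_sumr -sumrB -big_split /=; apply: eq_bigr => i _; ring.
rewrite e -!enorm_sq -/a -/b in h.
have : 0 <= 2 * a * b * (a * b - dotv u w) by nra.
move=> h2; have hp : 0 < 2 * a * b by rewrite !mulr_gt0.
by rewrite pmulr_rge0 // subr_ge0 mulrC in h2.
Qed.

End Vec.
Arguments dotv {R m}.
Arguments enorm_eq0 {R m u}.
Arguments dotv_CS {R m}.
Arguments enorm_ge0 {R m}.
Arguments enorm0 {R m}.
Arguments enorm_sq {R m}.
Arguments dotv0r {R m}.
Arguments dotv0l {R m}.

Definition pv (R : realType) m (tau : R) (z : 'rV[R]_m) (q : R) : 'rV[R]_m :=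
  if z == 0 then 0 else (Vtau tau z q / enorm z) *: z.
Arguments pv {R m}.

Lemma fenchel (R : realType) m (tau : R) (z w : 'rV[R]_m) q : 0 < tau -> 1 <= q <= 2 ->
  dotv w (pv tau z q) - enorm w `^ q <=
  dotv (tau^-1 *: (z - pv tau z q)) (pv tau z q) - enorm (tau^-1 *: (z - pv tau z q)) `^ q.
Proof.
move=> t0 /andP[q1 q2].
have qn0 : q != 0 by rewrite gt_eqF // (lt_le_trans _ q1).
rewrite /pv; case: eqP => [->|zn0].
  by rewrite subrr scaler0 enorm0 powR0 // !dotv0r subr0 sub0r lerNl oppr0 powR_ge0.
have a0 : 0 < enorm z.
  by rewrite lt_neqAle enorm_ge0 andbT eq_sym; apply/eqP => /enorm_eq0.
have [/andP[V0 Va] key] := @Vtau_key R m tau z q t0 a0 (introT andP (conj q1 q2)).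
set a := enorm z in a0 V0 Va key *; set V := Vtau tau z q in V0 Va key *.
set l := V / a.
have -> : tau^-1 *: (z - l *: z) = ((1 - l) / tau) *: z.
  by rewrite -{1}(scale1r z) -scalerBl scalerA mulrC.
rewrite !dotvZr dotvZl -enorm_sq enormZ -/a.
have l0 : 0 <= l by rewrite divr_ge0 // ltW.
have l1 : 1 - l >= 0 by rewrite subr_ge0 ler_pdivrMr // mul1r.
have hu : `|(1 - l) / tau| * a = (a - V) / tau.
  rewrite ger0_norm; last by rewrite divr_ge0 // ltW.
  rewrite /l; field; apply/andP; split; rewrite gt_eqF //.
have hdot : l * ((1 - l) / tau * a ^+ 2) = (a - V) / tau * V.
  rewrite /l; field; apply/andP; split; rewrite gt_eqF //.
rewrite hu hdot.
have h1 : l * dotv w z <= enorm w * V.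
  have := dotv_CS w z; rewrite -/a => h.
  have : l * dotv w z <= l * (enorm w * a) by rewrite ler_wpM2l.
  have e2 : l * (enorm w * a) = enorm w * V by rewrite /l; field; rewrite gt_eqF.
  by rewrite -e2.
have := key (enorm w) (enorm_ge0 w).
lra.
Qed.
Section Meas.
Context d (T : measurableType d) (R : realType) (D : set T) (mD : measurable D).

Lemma msum_seq (I : Type) (s : seq I) (F : I -> T -> R) : (forall i, measurable_fun D (F i)) ->
  measurable_fun D (fun x => \sum_(i <- s) F i x).
Proof.
move=> hF; elim: s => [|i s IH].
  by under eq_fun do rewrite big_nil; exact: measurable_cst.
by under eq_fun do rewrite big_cons; exact: measurable_funD.
Qed.

Lemma msum m (F : 'I_m -> T -> R) : (forall i, measurable_fun D (F i)) ->
  measurable_fun D (fun x => \sum_(i < m) F i x).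
Proof. exact: msum_seq. Qed.

Lemma menorm m (g : T -> 'rV[R]_m) : (forall i, measurable_fun D (fun x => g x 0 i)) ->
  measurable_fun D (fun x => enorm (g x)).
Proof.
move=> hg; rewrite /enorm.
apply: (@measurableT_comp _ _ _ _ _ _ (@Num.sqrt R) _ (fun x => \sum_(i < m) g x 0 i ^+ 2)).
  exact: continuous_measurable_fun (@sqrt_continuous R).
apply: msum => i; apply: measurable_funX; exact: hg.
Qed.

Lemma mifR (b : T -> bool) (f g : T -> R) : measurable_fun D b ->
  measurable_fun D f -> measurable_fun D g -> measurable_fun D (fun x => if b x then f x else g x).
Proof.
move=> mb mf mg; apply: measurable_fun_if => //.
  apply: measurable_funS mf => //; exact: subIsetl.
apply: measurable_funS mg => //; exact: subIsetl.
Qed.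

Lemma mpowR (a b : T -> R) : measurable_fun D a -> measurable_fun D b ->
  measurable_fun D (fun x => a x `^ b x).
Proof.
move=> ma mb; rewrite /powR.
apply: mifR.
- by apply: measurable_fun_eqr.
- have -> : (fun x => ((b x == 0)%:R : R)) = (fun x => if b x == 0 then 1 else 0).
    by apply: funext => x; case: (b x == 0).
  by apply: mifR => //; apply: measurable_fun_eqr.
- apply: measurableT_comp; first exact: measurable_expR.
  apply: measurable_funM => //; apply: measurableT_comp => //; exact: measurable_ln.
Qed.
End Meas.

Lemma alpha_ge0 (R : realType) (a q s : R) : 0 <= alpha_bar a q s.
Proof.
rewrite /alpha_bar; case: xgetP => [x _ [/andP[h _] _]|_]; [exact: ltW | by []].
Qed.

Lemma alpha_lt (R : realType) (a q s t : R) : 0 <= a -> 1 < q -> 0 < s -> 0 <= t ->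
  (t < alpha_bar a q s) = (t + s * q * t `^ (q - 1) < a).
Proof.
move=> a0 q1 s0 t0.
have q0 : 0 < q by apply: lt_trans q1.
have q10 : 0 < q - 1 by rewrite subr_gt0.
have G0 : 0 <= t + s * q * t `^ (q - 1) by rewrite addr_ge0 // mulr_ge0 ?powR_ge0 // mulr_ge0 // ltW.
move: a0; rewrite le_eqVlt => /orP[/eqP a0|a0].
  rewrite -a0 /alpha_bar xgetPN; last by move=> x [/andP[h1 h2] _]; have := lt_trans h1 h2; rewrite ltxx.
  by rewrite ltNge t0 /= ltNge G0.
have := xgetPex 0 (@alpha_ex R a q s a0 q1 s0); rewrite -/(alpha_bar a q s).
set al := alpha_bar a q s => -[/andP[al0 ala] hal].
apply/idP/idP => h.
  rewrite -hal; apply: ltr_leD => //.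
  by rewrite ler_pM2l ?mulr_gt0 //; apply: ge0_ler_powR; rewrite ?nnegrE //; apply: ltW.
rewrite ltNge; apply/negP => h2.
have : al + s * q * al `^ (q - 1) <= t + s * q * t `^ (q - 1).
  apply: lerD => //.
  by rewrite ler_pM2l ?mulr_gt0 //; apply: ge0_ler_powR; rewrite ?nnegrE //; apply: ltW.
rewrite hal => h3; have := lt_le_trans h h3; rewrite ltxx //.
Qed.

Section MeasAlpha.
Context d (T : measurableType d) (R : realType) (D : set T) (mD : measurable D).

Lemma malpha (a q : T -> R) (tau : R) : 0 < tau -> measurable_fun D a -> measurable_fun D q ->
  (forall x, D x -> 0 <= a x /\ 1 < q x) ->
  measurable_fun D (fun x => alpha_bar (a x) (q x) (tau `^ (1 - q x))).
Proof.
move=> t0 ma mq hD.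
apply: (measurability _ (RGenOInfty.measurableE R)) => //.
move=> /= _ [_ [t ->] <-]; rewrite preimage_itvoy.
case: (ltP t 0) => ht.
  rewrite (_ : _ `&` _ = D); first exact: mD.
  apply/seteqP; split=> [x [] //|x Dx]; split => //=.
  exact: (lt_le_trans ht (@alpha_ge0 R _ _ _)).
have mG : measurable_fun D (fun x => t + tau `^ (1 - q x) * q x * t `^ (q x - 1)).
  apply: measurable_funD => //; apply: measurable_funM; first apply: measurable_funM => //.
    apply: measurableT_comp; first exact: measurable_powRr.
    by apply: measurable_funB.
  apply: measurableT_comp; first exact: measurable_powRr.
  by apply: measurable_funB.
have := measurable_funB ma mG mD (measurable_itv `]0, +oo[).
congr measurable; apply/seteqP; split=> x [Dx /=]; rewrite in_itv /= andbT subr_gt0 => h;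
  split => //.
  by rewrite alpha_lt //; [exact: (hD x Dx).1|exact: (hD x Dx).2|exact: powR_gt0].
by move: h; rewrite alpha_lt //; [exact: (hD x Dx).1|exact: (hD x Dx).2|exact: powR_gt0].
Qed.
End MeasAlpha.

Section MeasPv.
Context d (T : measurableType d) (R : realType) (D : set T) (mD : measurable D).

Lemma mVtau m (tau : R) (z : T -> 'rV[R]_m) (q : T -> R) : 0 < tau ->
  (forall i, measurable_fun D (fun x => z x 0 i)) -> measurable_fun D q ->
  (forall x, D x -> 1 <= q x <= 2) ->
  measurable_fun D (fun x => Vtau tau (z x) (q x)).
Proof.
move=> t0 mz mq hq; rewrite /Vtau.
have me := menorm mz.
apply: measurable_fun_if => //; first by apply: measurable_fun_eqr.
  apply: measurable_funS (measurable_minr me (measurable_cst (1 : R))) => //; exact: subIsetl.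
have mD1 : measurable (D `&` (fun x => q x == 1) @^-1` [set false]).
  by apply: (measurable_fun_eqr mq (measurable_cst (1 : R))) => //.
apply: measurable_fun_if => //.
- apply: measurable_funS (measurable_fun_eqr mq (measurable_cst (2 : R))) => //; exact: subIsetl.
- apply: measurable_funS (_ : measurable_fun D (fun x => 2 * enorm (z x) / (tau + 2))) => //.
    by move=> x [[]].
  by apply: measurable_funM => //; apply: measurable_funM.
have mD2 : measurable ((D `&` (fun x => q x == 1) @^-1` [set false]) `&` (fun x => q x == 2) @^-1` [set false]).
  apply: (measurable_fun_eqr _ (measurable_cst (2 : R))) => //.
  apply: measurable_funS mq => //; exact: subIsetl.
apply: measurable_funB.
  apply: measurable_funS me => //; by move=> x [[]].
apply: malpha => //.
- apply: measurable_funS me => //; by move=> x [[]].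
- apply: measurable_funS mq => //; by move=> x [[]].
move=> x [[Dx /= /negbT h1] /= /negbT h2]; split; first exact: enorm_ge0.
have := hq x Dx; rewrite lt_neqAle eq_sym h1 /=; by case/andP.
Qed.

Lemma mpv m (tau : R) (z : T -> 'rV[R]_m) (q : T -> R) : 0 < tau ->
  (forall i, measurable_fun D (fun x => z x 0 i)) -> measurable_fun D q ->
  (forall x, D x -> 1 <= q x <= 2) ->
  forall i, measurable_fun D (fun x => pv tau (z x) (q x) 0 i).
Proof.
move=> t0 mz mq hq i.
have me := menorm mz.
apply: (eq_measurable_fun (fun x => if enorm (z x) == 0 then 0
   else Vtau tau (z x) (q x) * enorm (z x) `^ (-1) * z x 0 i)).
  move=> x _; rewrite /pv.
  case: eqP => [/enorm_eq0 ->|hn]; first by rewrite eqxx mxE.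
  case: eqP => [hz|_]; first by exfalso; apply: hn; rewrite hz enorm0.
  by rewrite mxE powR_inv1 ?enorm_ge0.
apply: mifR => //; first exact: measurable_fun_eqr.
apply: measurable_funM => //; apply: measurable_funM; first exact: mVtau.
exact: mpowR.
Qed.
End MeasPv.


Section Vec2.
Variables (R : realType) (m : nat).
Implicit Types (a b u w z : 'rV[R]_m).

Lemma dotvDl a b w : dotv (a + b) w = dotv a w + dotv b w.
Proof. by rewrite /dotv -big_split; apply: eq_bigr => i _; rewrite mxE mulrDl. Qed.

Lemma dotvDr a b w : dotv w (a + b) = dotv w a + dotv w b.
Proof. by rewrite dotvC dotvDl !(dotvC w). Qed.

Lemma norm_add_sq a b : enorm (a + b) ^+ 2 <= 2 * enorm a ^+ 2 + 2 * enorm b ^+ 2.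
Proof.
rewrite !enorm_sq dotvDl !dotvDr (dotvC b a) -!enorm_sq.
have := dotv_CS a b; have := sqr_ge0 (enorm a - enorm b); nra.
Qed.

Lemma abs_dot a b : `|dotv a b| <= enorm a ^+ 2 + enorm b ^+ 2.
Proof.
have h1 := dotv_CS a b.
have h2 := dotv_CS ((-1) *: a) b.
rewrite dotvZl enormZ normrN normr1 mul1r in h2.
have := sqr_ge0 (enorm a - enorm b).
have := enorm_ge0 a; have := enorm_ge0 b.
rewrite ler_norml; move=> *; apply/andP; split; nra.
Qed.
End Vec2.

Section L2kit.
Variables (R : realType) (n m : nat) (Om : set (Rd R n)) (mOm : measurable Om).
Local Notation mu := (lebd R n).
Local Notation T := (Rd R n).

Lemma L2_mcomp (g : T -> 'rV[R]_m) : L2 Om g -> forall i, measurable_fun Om (fun x => g x 0 i).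
Proof. by case. Qed.

Lemma L2_mnorm (g : T -> 'rV[R]_m) : L2 Om g -> measurable_fun Om (fun x => enorm (g x)).
Proof. by case=> h _; apply: menorm. Qed.

Lemma L2_int (g : T -> 'rV[R]_m) : L2 Om g ->
  mu.-integrable Om (EFin \o (fun x => enorm (g x) ^+ 2)).
Proof.
move=> hg; apply/integrableP; split.
  by apply: measurableT_comp => //; apply: measurable_funX; exact: L2_mnorm.
case: hg => _ h; apply: (le_lt_trans _ h); rewrite le_eqVlt; apply/orP; left; apply/eqP.
apply: eq_integral => x _ /=; by rewrite ger0_norm ?sqr_ge0.
Qed.

Lemma int_L2 (g : T -> 'rV[R]_m) : (forall i, measurable_fun Om (fun x => g x 0 i)) ->
  mu.-integrable Om (EFin \o (fun x => enorm (g x) ^+ 2)) -> L2 Om g.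
Proof.
move=> mg /integrableP[_ h]; split => //.
apply: le_lt_trans h; rewrite le_eqVlt; apply/orP; left; apply/eqP.
apply: eq_integral => x _ /=; by rewrite ger0_norm ?sqr_ge0.
Qed.

Lemma int_le (h G : T -> R) : measurable_fun Om h -> mu.-integrable Om (EFin \o G) ->
  (forall x, Om x -> `|h x| <= G x) -> mu.-integrable Om (EFin \o h).
Proof.
move=> mh iG hle; apply: le_integrable iG => //.
  exact: measurableT_comp.
move=> x Ox /=; rewrite lee_fin; apply: le_trans (hle x Ox) _; exact: ler_norm.
Qed.

Lemma int_add (A B : T -> R) : mu.-integrable Om (EFin \o A) -> mu.-integrable Om (EFin \o B) ->
  mu.-integrable Om (EFin \o (fun x => A x + B x)).
Proof. by move=> hA hB; exact: integrableD hA hB. Qed.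

Lemma int_scale (k : R) (A : T -> R) : mu.-integrable Om (EFin \o A) ->
  mu.-integrable Om (EFin \o (fun x => k * A x)).
Proof. by move=> hA; exact: integrableZl hA. Qed.

Lemma L2_add (g1 g2 : T -> 'rV[R]_m) : L2 Om g1 -> L2 Om g2 -> L2 Om (fun x => g1 x + g2 x).
Proof.
move=> h1 h2.
have mc : forall i, measurable_fun Om (fun x => (g1 x + g2 x) 0 i).
  move=> i; apply: (eq_measurable_fun (fun x => g1 x 0 i + g2 x 0 i)).
    by move=> x _; rewrite mxE.
  by apply: measurable_funD; apply: L2_mcomp.
apply: int_L2 => //.
apply: (@int_le _ (fun x => 2 * enorm (g1 x) ^+ 2 + 2 * enorm (g2 x) ^+ 2)).
- by apply: measurable_funX; apply: menorm.
- by apply: int_add; apply: int_scale; apply: L2_int.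
- move=> x _; rewrite ger0_norm ?sqr_ge0 //; exact: norm_add_sq.
Qed.

Lemma L2_scale (k : R) (g : T -> 'rV[R]_m) : L2 Om g -> L2 Om (fun x => k *: g x).
Proof.
move=> h.
have mc : forall i, measurable_fun Om (fun x => (k *: g x) 0 i).
  move=> i; apply: (eq_measurable_fun (fun x => k * g x 0 i)).
    by move=> x _; rewrite mxE.
  by apply: measurable_funM => //; apply: L2_mcomp.
apply: int_L2 => //.
apply: (@int_le _ (fun x => k ^+ 2 * enorm (g x) ^+ 2)).
- by apply: measurable_funX; apply: menorm.
- by apply: int_scale; apply: L2_int.
- by move=> x _; rewrite ger0_norm ?sqr_ge0 // enormZ exprMn real_normK ?num_real.
Qed.

Lemma mdot (g1 g2 : T -> 'rV[R]_m) : (forall i, measurable_fun Om (fun x => g1 x 0 i)) ->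
  (forall i, measurable_fun Om (fun x => g2 x 0 i)) ->
  measurable_fun Om (fun x => dotv (g1 x) (g2 x)).
Proof. by move=> h1 h2; apply: msum => i; apply: measurable_funM. Qed.

Lemma int_dot (g1 g2 : T -> 'rV[R]_m) : L2 Om g1 -> L2 Om g2 ->
  mu.-integrable Om (EFin \o (fun x => dotv (g1 x) (g2 x))).
Proof.
move=> h1 h2.
apply: (@int_le _ (fun x => enorm (g1 x) ^+ 2 + enorm (g2 x) ^+ 2)).
- by apply: mdot; apply: L2_mcomp.
- by apply: int_add; apply: L2_int.
- by move=> x _; exact: abs_dot.
Qed.
Lemma intE_add (A B : T -> R) : mu.-integrable Om (EFin \o A) -> mu.-integrable Om (EFin \o B) ->
  (\int[mu]_(x in Om) (A x + B x)%:E = \int[mu]_(x in Om) (A x)%:E + \int[mu]_(x in Om) (B x)%:E)%E.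
Proof. by move=> hA hB; exact: (integralD_EFin mOm hA hB). Qed.

Lemma intE_sub (A B : T -> R) : mu.-integrable Om (EFin \o A) -> mu.-integrable Om (EFin \o B) ->
  (\int[mu]_(x in Om) (A x - B x)%:E = \int[mu]_(x in Om) (A x)%:E - \int[mu]_(x in Om) (B x)%:E)%E.
Proof. by move=> hA hB; exact: (integralB_EFin mOm hA hB). Qed.

Lemma intE_scale (k : R) (A : T -> R) : mu.-integrable Om (EFin \o A) ->
  (\int[mu]_(x in Om) (k * A x)%:E = k%:E * \int[mu]_(x in Om) (A x)%:E)%E.
Proof. by move=> hA; exact: (integralZl mOm hA). Qed.

End L2kit.


Lemma pv_norm (R : realType) m (tau : R) (z : 'rV[R]_m) q : 0 < tau -> 1 <= q <= 2 ->
  enorm (pv tau z q) <= enorm z.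
Proof.
move=> t0 hq; rewrite /pv; case: eqP => [->|hz]; first by rewrite enorm0.
have a0 : 0 < enorm z.
  by rewrite lt_neqAle enorm_ge0 andbT eq_sym; apply/eqP => /enorm_eq0.
have [/andP[V0 Va] _] := @Vtau_key R m tau z q t0 a0 hq.
by rewrite enormZ ger0_norm ?divr_ge0 ?enorm_ge0 // divfK ?gt_eqF.
Qed.

Lemma ident (R : realType) m (tau : R) (f v w : 'rV[R]_m) (P : R) : 0 < tau ->
  tau * (dotv (tau^-1 *: (f - v)) w - P) + 2^-1 * enorm (w - f) ^+ 2 =
  (tau * (dotv (tau^-1 *: (f - v)) v - P) + 2^-1 * enorm (v - f) ^+ 2) + 2^-1 * enorm (w - v) ^+ 2.
Proof.
move=> t0; rewrite !enorm_sq !dotvZl.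
have key : dotv (f - v) w + 2^-1 * dotv (w - f) (w - f) =
   dotv (f - v) v + 2^-1 * dotv (v - f) (v - f) + 2^-1 * dotv (w - v) (w - v).
  rewrite /dotv !mulr_sumr -!big_split /=; apply: eq_bigr => i _; rewrite !mxE; by field.
have h1 : tau * (tau^-1 * dotv (f - v) w) = dotv (f - v) w by rewrite mulrA mulfV ?gt_eqF // mul1r.
have h2 : tau * (tau^-1 * dotv (f - v) v) = dotv (f - v) v by rewrite mulrA mulfV ?gt_eqF // mul1r.
rewrite !mulrBr h1 h2; lra.
Qed.

Lemma L2_sub (R : realType) n m (Om : set (Rd R n)) (mOm : measurable Om) (g1 g2 : Rd R n -> 'rV[R]_m) :
  L2 Om g1 -> L2 Om g2 -> L2 Om (fun x => g1 x - g2 x).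
Proof.
move=> h1 h2; have h := L2_add mOm h1 (L2_scale mOm (-1) h2).
by have -> : (fun x => g1 x - g2 x) = (fun x => g1 x + (-1) *: g2 x) by apply: funext => x; rewrite scaleN1r.
Qed.

Lemma int_sub (R : realType) n (Om : set (Rd R n)) (mOm : measurable Om) (A B : Rd R n -> R) :
  (lebd R n).-integrable Om (EFin \o A) -> (lebd R n).-integrable Om (EFin \o B) ->
  (lebd R n).-integrable Om (EFin \o (fun x => A x - B x)).
Proof.
move=> hA hB; have := int_add mOm hA (int_scale mOm (-1) hB).
by apply: eq_integrable => // x _ /=; rewrite mulN1r.
Qed.

Section Main.
Variables (R : realType) (n m : nat) (Om : set (Rd R n)) (mOm : measurable Om).
Variables (p : Rd R n -> R) (tau : R) (f : Rd R n -> 'rV[R]_m).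
Hypotheses (mp : measurable_fun Om p) (hp : forall x, Om x -> 1 <= p x <= 2)
  (t0 : 0 < tau) (Lf : L2 Om f).
Local Notation mu := (lebd R n).
Local Notation T := (Rd R n).

Let v := prox_formula tau p f.
Let u := fun x => tau^-1 *: (f x - v x).
Let c := fun x => dotv (u x) (v x) - enorm (u x) `^ p x.

Let L2v : L2 Om v.
Proof.
apply: int_L2.
  by move=> i; apply: mpv => //; apply: L2_mcomp.
apply: (@int_le _ _ _ mOm _ (fun x => enorm (f x) ^+ 2)).
- by apply: measurable_funX; apply: menorm => i; apply: mpv => //; apply: L2_mcomp.
- exact: L2_int.
- move=> x Ox; rewrite ger0_norm ?sqr_ge0 // lerXn2r ?nnegrE ?enorm_ge0 //.
  exact: pv_norm (hp Ox).
Qed.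

Let L2u : L2 Om u.
Proof.
have h : L2 Om (fun x => f x + (-1) *: v x) by apply: L2_add => //; apply: L2_scale.
have -> : u = (fun x => tau^-1 *: (fun x => f x + (-1) *: v x) x).
  by apply: funext => x; rewrite /u scaleN1r.
exact: L2_scale h.
Qed.

Let fen x : Om x -> forall w, dotv w (v x) - enorm w `^ p x <= c x.
Proof. by move=> Ox w; exact: fenchel (hp Ox). Qed.

Let pn0 x : Om x -> p x != 0.
Proof. by move=> Ox; have /andP[h _] := hp Ox; rewrite gt_eqF // (lt_le_trans _ h). Qed.

Let c_ge0 x : Om x -> 0 <= c x.
Proof. by move=> Ox; have := fen Ox 0; rewrite dotv0l enorm0 powR0 ?pn0 // subrr. Qed.

Let mupow : measurable_fun Om (fun x => enorm (u x) `^ p x).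
Proof. by apply: mpowR => //; apply: L2_mnorm. Qed.

Let mc : measurable_fun Om c.
Proof. by apply: measurable_funB => //; apply: mdot; apply: L2_mcomp. Qed.

Let ic : mu.-integrable Om (EFin \o c).
Proof.
apply: (@int_le _ _ _ mOm _ (fun x => enorm (u x) ^+ 2 + enorm (v x) ^+ 2)) => //.
  by apply: (int_add mOm); apply: L2_int.
move=> x Ox; rewrite ger0_norm ?c_ge0 //.
apply: le_trans (abs_dot (u x) (v x)); apply: le_trans (ler_norm _).
by rewrite /c lerBlDr lerDl powR_ge0.
Qed.

Let iupow : mu.-integrable Om (EFin \o (fun x => enorm (u x) `^ p x)).
Proof.
apply: (@int_le _ _ _ mOm _ (fun x => enorm (u x) ^+ 2 + enorm (v x) ^+ 2)) => //.
  by apply: (int_add mOm); apply: L2_int.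
move=> x Ox; rewrite ger0_norm ?powR_ge0 //.
apply: le_trans (abs_dot (u x) (v x)); apply: le_trans (ler_norm _).
by have := c_ge0 Ox; rewrite /c subr_ge0.
Qed.

Let K1 := fun x => tau * c x + 2^-1 * enorm (v x - f x) ^+ 2.
Let Aval := (\int[mu]_(x in Om) (K1 x)%:E)%E.

Let L2vf : L2 Om (fun x => v x - f x).
Proof. exact: L2_sub. Qed.

Let iK1 : mu.-integrable Om (EFin \o K1).
Proof. by apply: (int_add mOm); apply: int_scale => //; apply: L2_int. Qed.

Let lowerA h : L2 Om h ->
  (Aval + (2^-1)%:E * L2norm2 Om (fun x => (h x - v x)%R) <= prox_objective Om (rho_star Om p) tau f h)%E.
Proof.
move=> Lh; rewrite /prox_objective.
have h1 : (L2inner Om u h - rho Om p u <= rho_star Om p h)%E.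
  by apply: ereal_sup_ubound; exists u.
have e : (tau%:E * (L2inner Om u h - rho Om p u) + (2^-1)%:E * L2norm2 Om (fun x => (h x - f x)%R) =
    Aval + (2^-1)%:E * L2norm2 Om (fun x => (h x - v x)%R))%E.
  rewrite /L2inner /rho /L2norm2.
  rewrite -(intE_sub mOm (int_dot mOm L2u Lh) iupow).
  rewrite -(intE_scale mOm tau (int_sub mOm (int_dot mOm L2u Lh) iupow)).
  rewrite -(intE_scale mOm (2^-1) (L2_int (L2_sub mOm Lh Lf))).
  rewrite -(intE_add mOm (int_scale mOm tau (int_sub mOm (int_dot mOm L2u Lh) iupow))
                         (int_scale mOm (2^-1) (L2_int (L2_sub mOm Lh Lf)))).
  transitivity (\int[mu]_(x in Om) (K1 x + 2^-1 * enorm (h x - v x) ^+ 2)%:E)%E.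
    apply: eq_integral => x _; congr (_%:E); rewrite /K1 /c /u.
    exact: (ident _ _ _ _ t0).
  rewrite (intE_add mOm iK1 (int_scale mOm (2^-1) (L2_int (L2_sub mOm Lh L2v)))).
  by rewrite (intE_scale mOm (2^-1) (L2_int (L2_sub mOm Lh L2v))).
rewrite -e; apply: leeD2r; apply: lee_wpmul2l => //; by rewrite lee_fin ltW.
Qed.

Let Cval := (\int[mu]_(x in Om) (c x)%:E)%E.

Let upper : (rho_star Om p v <= Cval)%E.
Proof.
apply: ge_ereal_sup => _ [w Lw <-].
have r0 : (0 <= rho Om p w)%E by apply: integral_ge0 => x _; rewrite lee_fin powR_ge0.
have [rinf|rfin] := eqVneq (rho Om p w) +oo%E.
  by rewrite rinf addeNy leNye.
have rlt : (rho Om p w < +oo)%E by rewrite lt_neqAle rfin leey.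
have iw : mu.-integrable Om (EFin \o (fun x => enorm (w x) `^ p x)).
  apply/integrableP; split.
    by apply: measurableT_comp => //; apply: mpowR => //; apply: L2_mnorm.
  apply: le_lt_trans rlt; rewrite le_eqVlt; apply/orP; left; apply/eqP.
  by apply: eq_integral => x _ /=; rewrite ger0_norm ?powR_ge0.
have le : (L2inner Om w v <= \int[mu]_(x in Om) (enorm (w x) `^ p x + c x)%:E)%E.
  apply: le_integral => //.
  - exact: (int_dot mOm Lw L2v).
  - exact: (int_add mOm iw ic).
  - move=> x /[1!inE] Ox; rewrite lee_fin; have := fen Ox (w x); rewrite /dotv; lra.
rewrite (intE_add mOm iw ic) in le.
by rewrite leeBlDl ?ge0_fin_numE.
Qed.

Let Aval_obj : (prox_objective Om (rho_star Om p) tau f v <= Aval)%E.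
Proof.
rewrite /prox_objective /Aval /K1.
rewrite (intE_add mOm (int_scale mOm tau ic) (int_scale mOm (2^-1) (L2_int L2vf))).
rewrite (intE_scale mOm tau ic) (intE_scale mOm (2^-1) (L2_int L2vf)).
apply: leeD2r; apply: lee_wpmul2l; [by rewrite lee_fin ltW | exact: upper].
Qed.

Lemma main_prox : is_prox Om (rho_star Om p) tau f (prox_formula tau p f).
Proof.
split => // h Lh.
apply: le_trans Aval_obj _; apply: le_trans (lowerA Lh).
apply: lee_paddr => //; apply: mule_ge0; first by rewrite lee_fin invr_ge0.
by apply: integral_ge0 => x _; rewrite lee_fin sqr_ge0.
Qed.

Lemma main_uniq g : is_prox Om (rho_star Om p) tau f g ->
  {ae mu, forall x, Om x -> g x = prox_formula tau p f x}.
Proof.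
case=> Lg hg.
have h1 := hg v L2v.
have h2 := lowerA Lg.
have hA : Aval \is a fin_num by apply: integrable_fin_num.
set N := L2norm2 Om (fun x => (g x - v x)%R) in h2.
have N0 : (0 <= N)%E by apply: integral_ge0 => x _; rewrite lee_fin sqr_ge0.
have N0' : (N <= 0)%E.
  have : (Aval + (2^-1)%:E * N <= Aval + 0)%E.
    by rewrite adde0; apply: le_trans h2 (le_trans h1 Aval_obj).
  rewrite leeD2lE // pmule_rle0 //; by rewrite lte_fin invr_gt0.
have NN : N = 0%E by apply/eqP; rewrite eq_le N0 N0'.
have mN : measurable_fun Om (fun x => (enorm (g x - v x) ^+ 2)%:E).
  apply: measurableT_comp => //; apply: measurable_funX; apply: L2_mnorm.
  exact: L2_sub.
have H : ae_eq mu Om (fun x => (enorm (g x - v x) ^+ 2)%:E) (cst 0%E).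
  apply: (ae_eq_integral_abs mu mOm mN).1.
  rewrite -NN /N /L2norm2; apply: eq_integral => x _ /=.
  by rewrite ger0_norm ?sqr_ge0.
apply: filterS H => x hx Ox.
have := hx Ox; rewrite /cst => -[] /eqP.
rewrite sqrf_eq0 => /eqP /enorm_eq0 /eqP; rewrite subr_eq0 => /eqP //.
Qed.

End Main.


Unset Implicit Arguments.

(* d = n.+1 ; Omega is an open connected subset of R^d = 'rV[R]_(n.+1);
   Om' := vecRd @^-1` Omega is Omega in the product model carrying
   Lebesgue measure lebd R n. *)
Theorem mainTheorem6 (R : realType) (n m : nat) (Omega : set 'rV[R]_n.+1)
  (p : Rd R n -> R) (tau : R) (f : Rd R n -> 'rV[R]_m) :
  open Omega -> connected Omega -> (0 < m)%N ->
  measurable_fun (@vecRd R n @^-1` Omega) p ->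
  (forall x, (@vecRd R n @^-1` Omega) x -> 1 <= p x <= 2) ->
  0 < tau ->
  L2 (@vecRd R n @^-1` Omega) f ->
  is_prox (@vecRd R n @^-1` Omega) (rho_star (@vecRd R n @^-1` Omega) p) tau f
    (prox_formula tau p f) /\
  (forall g, is_prox (@vecRd R n @^-1` Omega) (rho_star (@vecRd R n @^-1` Omega) p) tau f g ->
     {ae lebd R n, forall x, (@vecRd R n @^-1` Omega) x -> g x = prox_formula tau p f x}).
Proof.
move=> oO _ _ mp hp t0 Lf.
have mOm := open_preimage_meas oO.
split; [exact: main_prox | exact: main_uniq].
Qed.
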